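(* Let $\Theta\subset\mathbb{R}$ be a finite set of states, $\pi$ a probability distribution on $\Theta$ (Alice's prior) and $\widetilde\pi$ a probability distribution on $\Theta$ (Carroll's prior). Then Carroll is monotonic-optimistic if and only if $\widetilde\pi$ is a monotonic strengthening of $\pi$. Moreover, these are also equivalent to each of the following statements: (i) $\widetilde\pi\ge_{\mathrm{lr}}\pi$ on $\Theta$; (ii) $\widetilde{\mathbb{P}}\ge_{\mathrm{lr}}\mathbb{P}$ on $S$ for every MLRP signaling structure $(S,\sigma)$; (iii) $(R,\widetilde{\mathbb{P}})\ge_{\mathrm{lr}}(R,\mathbb{P})$ for every MLRP signaling structure $(S,\sigma)$ and every increasing function $R:S\to\mathbb{R}$.
   Context: A signaling structure on $\Theta$ is a finite set $S\subset\mathbb{R}$ of signals with probabilities $\sigma(s\mid\theta)\ge0$, $\sum_{s\in S}\sigma(s\mid\theta)=1$ for each $\theta$. It has the monotone likelihood ratio property (MLRP) if $\sigma(s'\mid\theta)/\sigma(s\mid\theta)$ is (weakly) increasing in $\theta$ whenever $s'>s$. For a prior $\rho$, $\mathbb{P}_{\rho,\sigma}(\theta,s)=\rho(\theta)\sigma(s\mid\theta)$; write $\mathbb{P}=\mathbb{P}_{\pi,\sigma}$, $\widetilde{\mathbb{P}}=\mathbb{P}_{\widetilde\pi,\sigma}$ (and their marginals on $S$). For $\Gamma\subseteq\Theta$, Alice's posterior is $Q_\Gamma(s)=\mathbb{P}(\Gamma\mid s)$ (for $\mathbb{P}(s)>0$). For a function $R$ on $S$ and a probability $\mathbb{Q}$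 on $S$, $(R,\mathbb{Q})$ denotes the random variable taking value $R(s)$ with probability $\mathbb{Q}(s)$. $X\ge_{\mathrm{lr}}Y$ (likelihood ratio order) means $\mathbb{P}(X=v)/\mathbb{P}(Y=v)$ is weakly increasing in $v$ (equivalently $\mathbb{P}(X=u)\mathbb{P}(Y=v)\le\mathbb{P}(X=v)\mathbb{P}(Y=u)$ for $u<v$); for distributions on $\Theta$ or $S$ it is applied to the identity random variable. A set $\Gamma\subseteq\Theta$ is an upper set if $\theta\in\Gamma$, $\theta'\in\Theta$, $\theta'>\theta$ imply $\theta'\in\Gamma$. Carroll is monotonic-optimistic if $(Q_\Gamma,\widetilde{\mathbb{P}})\ge_{\mathrm{lr}}(Q_\Gamma,\mathbb{P})$ for every upper set $\Gamma\subseteq\Theta$ and every MLRP signaling structure $(S,\sigma)$. For a prior $\rho$ and $\Gamma$ with $\rho(\Gamma)>0$, a $\Gamma$-strengthening of $\rho$ is any $a\rho^\Gamma+(1-a)\rho$ with $a\in[0,1]$, where $\rho^\Gamma(\theta)=\rho(\theta\mid\Gamma)$. $\widetilde\pi$ is a monotonic strengthening of $\pi$ if it is obtained by a finite sequence of $\Gamma_i$-strengthenings starting from $\pi$ (each applied to the distribution obtained at the previous step), where all $\Gamma_i\subset\Theta$ are upper sets. Increasing means weakly increasing. *)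

(* Defs.v *)
From HB Require Import structures.
From mathcomp Require Import all_boot all_order all_algebra.
From mathcomp Require Import finmap.
From mathcomp Require Import reals.

Set Implicit Arguments.
Unset Strict Implicit.
Unset Printing Implicit Defensive.

Import Order.TTheory GRing.Theory Num.Theory.
Local Open Scope ring_scope.
Local Open Scope fset_scope.

Section Defs.
Variable R : realType.

(* Finite subsets of R (states Theta, signals S, events Gamma) are {fset R}.
   Distributions / functions are total functions R -> R; only their values
   on the relevant finite set matter. *)

Definition mass (rho : R -> R) (A : {fset R}) : R := \sum_(x <- A) rho x.

Definition is_prob (A : {fset R}) (rho : R -> R) : Prop :=
  (forall x, x \in A -> 0 <= rho x) /\ mass rho A = 1.

(* sigma th s = sigma(s | th): (S, sigma) is a signaling structure on Theta *)
Definition signaling (Theta S : {fset R}) (sigma : R -> R -> R) : Prop :=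
  forall th, th \in Theta ->
    (forall s, s \in S -> 0 <= sigma th s) /\ \sum_(s <- S) sigma th s = 1.

(* MLRP: sigma(s'|th)/sigma(s|th) weakly increasing in th whenever s' > s,
   written in cross-multiplied form (the standard reading with zeros). *)
Definition MLRP (Theta S : {fset R}) (sigma : R -> R -> R) : Prop :=
  forall s s' th th', s \in S -> s' \in S -> th \in Theta -> th' \in Theta ->
    s < s' -> th < th' ->
    sigma th s' * sigma th' s <= sigma th' s' * sigma th s.

Definition marg (Theta : {fset R}) (rho : R -> R) (sigma : R -> R -> R) (s : R) : R :=
  \sum_(th <- Theta) rho th * sigma th s.

(* Prob((Rf, Q) = v) for the random variable taking value Rf s w.p. Q s, s in S *)
Definition pmass (S : {fset R}) (Rf : R -> R) (Q : R -> R) (v : R) : R :=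
  \sum_(s <- S | Rf s == v) Q s.

Definition lr_ge (S : {fset R}) (Rf : R -> R) (Q1 Q2 : R -> R) : Prop :=
  forall u v, u < v -> pmass S Rf Q1 u * pmass S Rf Q2 v <= pmass S Rf Q1 v * pmass S Rf Q2 u.

(* Alice's posterior Q_Gamma(s) = P(Gamma | s) (value irrelevant when P(s) = 0) *)
Definition posterior (Theta Gamma : {fset R}) (pi : R -> R) (sigma : R -> R -> R) (s : R) : R :=
  (\sum_(th <- Theta | th \in Gamma) pi th * sigma th s) / marg Theta pi sigma s.

Definition upper_set (Theta Gamma : {fset R}) : Prop :=
  (forall th, th \in Gamma -> th \in Theta) /\
  (forall th th', th \in Gamma -> th' \in Theta -> th < th' -> th' \in Gamma).

Definition cond (rho : R -> R) (Gamma : {fset R}) (th : R) : R :=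
  if th \in Gamma then rho th / mass rho Gamma else 0.

Definition strengthen (Gamma : {fset R}) (a : R) (rho : R -> R) (th : R) : R :=
  a * cond rho Gamma th + (1 - a) * rho th.

Inductive mono_reach (Theta : {fset R}) (rho : R -> R) : (R -> R) -> Prop :=
| mono_reach0 : mono_reach Theta rho rho
| mono_reachS (rho1 : R -> R) (Gamma : {fset R}) (a : R) :
    mono_reach Theta rho rho1 -> upper_set Theta Gamma -> 0 <= a <= 1 ->
    0 < mass rho1 Gamma -> mono_reach Theta rho (strengthen Gamma a rho1).

Definition monotonic_strengthening (Theta : {fset R}) (pi pit : R -> R) : Prop :=
  exists rho, mono_reach Theta pi rho /\ {in Theta, pit =1 rho}.

Definition monotonic_optimistic (Theta : {fset R}) (pi pit : R -> R) : Prop :=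
  forall Gamma : {fset R}, upper_set Theta Gamma ->
  forall (S : {fset R}) (sigma : R -> R -> R), signaling Theta S sigma -> MLRP Theta S sigma ->
    lr_ge S (posterior Theta Gamma pi sigma) (marg Theta pit sigma) (marg Theta pi sigma).

End Defs.

(* Main.v *)
Require Import Defs.
From HB Require Import structures.
From mathcomp Require Import all_boot all_order all_algebra.
From mathcomp Require Import finmap.
From mathcomp Require Import reals.
From mathcomp Require Import ring lra zify.
Import Order.TTheory GRing.Theory Num.Theory.
Local Open Scope ring_scope.
Local Open Scope fset_scope.
Set Warnings "-all".
Set Implicit Arguments.
Unset Strict Implicit.
Section Helpers.
Variable R : realType.
Local Open Scope ring_scope.
Implicit Types (Theta S Gamma : {fset R}).

Lemma sum_eq1 (s : {fset R}) (P : pred R) (F : R -> R) k :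
  k \in s -> (forall x, x \in s -> P x = (x == k)) ->
  \sum_(x <- s | P x) F x = F k.
Proof.
move=> ks HP.
have -> : \sum_(x <- s | P x) F x = \sum_(x <- s | x == k) F x.
  rewrite big_seq_cond [RHS]big_seq_cond; apply: eq_bigl => x.
  by case: (boolP (x \in s)) => //= xs; rewrite HP.
exact: (@fbig_pred1_inj R 0 +%R R R F id s k ks (@inj_id R)).
Qed.

Lemma sum_ind (s : {fset R}) k (c : R) :
  \sum_(x <- s) c * (x == k)%:R = if k \in s then c else 0.
Proof.
have -> : \sum_(x <- s) c * (x == k)%:R = \sum_(x <- s | x == k) c.
  by rewrite [RHS]big_mkcond; apply: eq_bigr => x _; case: (x == k); rewrite ?mulr1 ?mulr0.
case: ifP => ks; first by rewrite (@sum_eq1 s (fun x => x == k) (fun _ => c) k).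
rewrite big_seq_cond big_pred0 // => x; apply/negP => /andP[xs /eqP xk].
by move: ks; rewrite -xk xs.
Qed.

Lemma sum_sub Theta Gamma (F : R -> R) :
  (forall x, x \in Gamma -> x \in Theta) ->
  \sum_(x <- Theta | x \in Gamma) F x = \sum_(x <- Gamma) F x.
Proof.
move=> sub; rewrite -big_filter; apply: perm_big; apply: uniq_perm.
- by rewrite filter_uniq // fset_uniq.
- exact: fset_uniq.
- move=> x; rewrite mem_filter; apply/andP/idP => [[]//|xG]; split => //; exact: sub.
Qed.

Lemma sum_ge0s (s : {fset R}) (F : R -> R) :
  (forall x, x \in s -> 0 <= F x) -> 0 <= \sum_(x <- s) F x.
Proof. by move=> H; rewrite big_seq; apply: sumr_ge0 => x; apply: H. Qed.

Lemma sum_ge1 (s : {fset R}) (F : R -> R) x0 :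
  x0 \in s -> (forall x, x \in s -> 0 <= F x) -> F x0 <= \sum_(x <- s) F x.
Proof.
move=> x0s H; rewrite (bigD1_seq x0) //= ?fset_uniq // lerDl.
rewrite big_seq_cond; apply: sumr_ge0 => x /andP[xs _]; exact: H.
Qed.

Lemma sum_eq0s (s : {fset R}) (F : R -> R) :
  (forall x, x \in s -> 0 <= F x) -> \sum_(x <- s) F x = 0 ->
  forall x, x \in s -> F x = 0.
Proof.
move=> H S0 x xs; apply/eqP; rewrite eq_le H // andbT -S0; exact: sum_ge1.
Qed.

Definition LR Theta (p q : R -> R) :=
  forall u v, u \in Theta -> v \in Theta -> u < v -> p u * q v <= p v * q u.

Lemma pmass_id S (Q : R -> R) u :
  pmass S (fun x => x) Q u = if u \in S then Q u else 0.
Proof.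
rewrite /pmass; case: ifP => uS; first exact: sum_eq1.
rewrite big_seq_cond big_pred0 // => x; apply/negP => /andP[xs /eqP xk].
by move: uS; rewrite -xk xs.
Qed.

Lemma lrid_LR Theta p q : lr_ge Theta (fun x => x) p q <-> LR Theta p q.
Proof.
split=> H u v.
- move=> uT vT uv; move: (H u v uv); by rewrite !pmass_id uT vT.
- move=> uv; rewrite !pmass_id; case: ifP => uT; case: ifP => vT;
    rewrite ?mulr0 ?mul0r //; exact: H.
Qed.

Lemma mono_mul (x y cu cv : R) :
  0 <= cu -> cu <= cv -> 0 <= y -> x <= y -> x * cu <= y * cv.
Proof.
move=> cu0 cuv y0 xy; apply: (le_trans (y := y * cu)).
  exact: ler_wpM2r. exact: ler_wpM2l.
Qed.

Lemma reach_LR Theta (pi rho : R -> R) :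
  (forall th, th \in Theta -> 0 < pi th) -> mono_reach Theta pi rho ->
  (forall th, th \in Theta -> 0 <= rho th) /\ LR Theta rho pi.
Proof.
move=> pipos; elim => [|rho1 Gamma a _ [IH0 IHL] [GT Gup] /andP[a0 a1] m0].
  split=> [th /pipos /ltW //|u v _ _ _]; by rewrite mulrC.
set m := mass rho1 Gamma.
set c := fun th => ((if th \in Gamma then a / m else 0) + (1 - a))%R.
have Hs : forall th, strengthen Gamma a rho1 th = rho1 th * c th.
  move=> th; rewrite /strengthen /cond /c -/m; case: ifP => _; last ring.
  by field; rewrite gt_eqF.
have c0 : forall th, 0 <= c th.
  move=> th; rewrite /c; case: ifP => _; rewrite ?add0r ?subr_ge0 //.
  apply: addr_ge0; rewrite ?subr_ge0 //; apply: divr_ge0 => //; exact: ltW.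
split.
  move=> th thT; rewrite Hs; apply: mulr_ge0; [exact: IH0| exact: c0].
move=> u v uT vT uv; rewrite !Hs.
have cuv : c u <= c v.
  rewrite /c; case: ifP => uG; first by rewrite (Gup u v uG vT uv).
  case: ifP => _; rewrite ?lerD2r //; apply: divr_ge0 => //; exact: ltW.
rewrite mulrAC [rho1 v * _ * _]mulrAC; apply: mono_mul => //.
  apply: mulr_ge0; [exact: IH0 | exact/ltW/pipos].
exact: IHL.
Qed.
End Helpers.
Section Core.
Variable R : realType.
Local Open Scope ring_scope.
Implicit Types (Theta S Gamma : {fset R}).

Lemma swap_sum2 Theta (F : R -> R -> R) :
  \sum_(x <- Theta) \sum_(y <- Theta) (F x y + F y x) =
  (\sum_(x <- Theta) \sum_(y <- Theta) F x y) *+ 2.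
Proof.
under eq_bigr do rewrite big_split /=.
rewrite big_split /= [X in _ + X = _]exchange_big /=.
by rewrite mulr2n.
Qed.

Lemma L2 Theta S (sigma : R -> R -> R) (pit pi : R -> R) a b :
  LR Theta pit pi -> MLRP Theta S sigma -> a \in S -> b \in S -> a < b ->
  marg Theta pit sigma a * marg Theta pi sigma b <=
  marg Theta pit sigma b * marg Theta pi sigma a.
Proof.
move=> HLR HM aS bS ab.
rewrite /marg !big_distrl /=.
under eq_bigr do rewrite big_distrr /=.
under [X in _ <= X]eq_bigr do rewrite big_distrr /=.
set F := fun x y => pit x * sigma x a * (pi y * sigma y b).
set G := fun x y => pit x * sigma x b * (pi y * sigma y a).
rewrite -[X in X <= _]/(\sum_(x <- Theta) \sum_(y <- Theta) F x y).
rewrite -[X in _ <= X]/(\sum_(x <- Theta) \sum_(y <- Theta) G x y).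
rewrite -(ler_pMn2r (n := 2)) // -!swap_sum2.
rewrite big_seq [X in _ <= X]big_seq; apply: ler_sum => x xT.
rewrite big_seq [X in _ <= X]big_seq; apply: ler_sum => y yT.
rewrite -subr_ge0.
have -> : G x y + G y x - (F x y + F y x) =
  (pit x * pi y - pit y * pi x) * (sigma x b * sigma y a - sigma x a * sigma y b).
  by rewrite /F /G; ring.
case: (ltgtP x y) => [xy|yx|->]; last by rewrite subrr mul0r.
- apply: mulr_le0; rewrite subr_le0; first exact: HLR.
  by rewrite [sigma x a * _]mulrC; apply: HM.
- apply: mulr_ge0; rewrite subr_ge0; first exact: HLR.
  by rewrite [sigma x a * _]mulrC; apply: HM.
Qed.

Lemma core Theta S (sigma : R -> R -> R) (pit pi Rf : R -> R) :
  LR Theta pit pi -> MLRP Theta S sigma ->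
  (forall s, s \in S -> marg Theta pi sigma s = 0 -> marg Theta pit sigma s = 0) ->
  (forall a b, a \in S -> b \in S -> marg Theta pi sigma a != 0 ->
     marg Theta pi sigma b != 0 -> b <= a -> Rf b <= Rf a) ->
  lr_ge S Rf (marg Theta pit sigma) (marg Theta pi sigma).
Proof.
move=> HLR HM Hz Hmono u v uv; rewrite /pmass.
rewrite [X in _ <= X]mulrC !big_distrl /=.
rewrite big_seq_cond [X in _ <= X]big_seq_cond; apply: ler_sum => a /andP[aS /eqP au].
rewrite !big_distrr /=.
rewrite big_seq_cond [X in _ <= X]big_seq_cond; apply: ler_sum => b /andP[bS /eqP bv].
have [za|nza] := eqVneq (marg Theta pi sigma a) 0.
  by rewrite za (Hz a aS za) !mul0r.
have [zb|nzb] := eqVneq (marg Theta pi sigma b) 0.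
  by rewrite zb (Hz b bS zb) !mulr0.
have ab : a < b.
  rewrite ltNge; apply/negP => ba.
  by move: (Hmono a b aS bS nza nzb ba); rewrite au bv leNgt uv.
by rewrite [X in _ <= X]mulrC; exact: (L2 HLR HM aS bS ab).
Qed.
End Core.
Section Signals.
Variable R : realType.
Local Open Scope ring_scope.
Implicit Types (Theta S Gamma : {fset R}).

Lemma marg_ge0 Theta S (sigma : R -> R -> R) (rho : R -> R) s :
  signaling Theta S sigma -> (forall th, th \in Theta -> 0 <= rho th) -> s \in S ->
  0 <= marg Theta rho sigma s.
Proof.
move=> Hs H0 sS; apply: sum_ge0s => th thT; apply: mulr_ge0; first exact: H0.
by case: (Hs th thT) => H _; apply: H.
Qed.

Lemma Zc Theta S (sigma : R -> R -> R) (pi pit : R -> R) :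
  signaling Theta S sigma -> (forall th, th \in Theta -> 0 < pi th) ->
  forall s, s \in S -> marg Theta pi sigma s = 0 -> marg Theta pit sigma s = 0.
Proof.
move=> Hs Hpi s sS H.
have Hn : forall x, x \in Theta -> 0 <= pi x * sigma x s.
  move=> x xT; apply: mulr_ge0; first exact/ltW/Hpi.
  by case: (Hs x xT) => Hx _; apply: Hx.
have H0 := sum_eq0s Hn H.
rewrite /marg big_seq big1 // => th thT.
move: (H0 th thT) => /eqP; rewrite mulf_eq0 => /orP[/eqP p0|/eqP ->]; last by rewrite mulr0.
by move: (Hpi th thT); rewrite p0 ltxx.
Qed.

Lemma iii_of_LR Theta (pi pit : R -> R) :
  (forall th, th \in Theta -> 0 < pi th) -> LR Theta pit pi ->
  forall (S : {fset R}) (sigma : R -> R -> R),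
    signaling Theta S sigma -> MLRP Theta S sigma ->
    forall Rf : R -> R, {in S &, forall s s', s <= s' -> Rf s <= Rf s'} ->
    lr_ge S Rf (marg Theta pit sigma) (marg Theta pi sigma).
Proof.
move=> Hpi HLR S sigma Hs HM Rf Hmono; apply: core => //.
  exact: Zc.
by move=> a b aS bS _ _ ba; apply: Hmono.
Qed.

Lemma post_mono Theta S Gamma (sigma : R -> R -> R) (pi : R -> R) :
  upper_set Theta Gamma -> MLRP Theta S sigma -> signaling Theta S sigma ->
  (forall th, th \in Theta -> 0 < pi th) ->
  forall a b, a \in S -> b \in S -> marg Theta pi sigma a != 0 ->
     marg Theta pi sigma b != 0 -> b <= a ->
     posterior Theta Gamma pi sigma b <= posterior Theta Gamma pi sigma a.
Proof.
move=> [GT Gup] HM Hs Hpi a b aS bS nza nzb ba.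
have pos : forall x, x \in S -> marg Theta pi sigma x != 0 -> 0 < marg Theta pi sigma x.
  move=> x xS nz; rewrite lt_def nz /=; apply: (marg_ge0 Hs) => //.
  by move=> th /Hpi /ltW.
rewrite /posterior ler_pdivrMr ?pos // mulrAC ler_pdivlMr ?pos //.
case: (eqVneq b a) => [->//|nba].
have {nba ba} ba : b < a by rewrite lt_def eq_sym nba ba.
have DNL : forall x, marg Theta pi sigma x =
   \sum_(i <- Theta | i \in Gamma) pi i * sigma i x + \sum_(i <- Theta | i \notin Gamma) pi i * sigma i x.
  by move=> x; rewrite /marg (bigID (fun th => th \in Gamma)).
rewrite !DNL.
set Na := \sum_(i <- Theta | i \in Gamma) pi i * sigma i a.
set Nb := \sum_(i <- Theta | i \in Gamma) pi i * sigma i b.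
set La := \sum_(i <- Theta | i \notin Gamma) pi i * sigma i a.
set Lb := \sum_(i <- Theta | i \notin Gamma) pi i * sigma i b.
rewrite !mulrDr [Nb * Na]mulrC lerD2l.
rewrite /Na /Nb /La /Lb !big_distrl /=.
rewrite big_seq_cond [X in _ <= X]big_seq_cond; apply: ler_sum => x /andP[xT xG].
rewrite !big_distrr /=.
rewrite big_seq_cond [X in _ <= X]big_seq_cond; apply: ler_sum => y /andP[yT yG].
have yx : y < x.
  case: (ltgtP y x) => // [xy|yx]; first by move: yG; rewrite (Gup x y xG yT xy).
  by move: yG; rewrite yx xG.
have := HM b a y x bS aS yT xT ba yx.
have p0 : 0 <= pi x * pi y by apply: mulr_ge0; apply/ltW/Hpi.
move=> H.
have -> : pi x * sigma x b * (pi y * sigma y a) = (pi x * pi y) * (sigma y a * sigma x b) by ring.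
have -> : pi x * sigma x a * (pi y * sigma y b) = (pi x * pi y) * (sigma x a * sigma y b) by ring.
exact: ler_wpM2l.
Qed.

Lemma MO_of_LR Theta (pi pit : R -> R) :
  (forall th, th \in Theta -> 0 < pi th) -> LR Theta pit pi ->
  monotonic_optimistic Theta pi pit.
Proof.
move=> Hpi HLR Gamma HG S sigma Hs HM; apply: core => //.
  exact: Zc.
move=> a b aS bS nza nzb ba; exact: (post_mono HG HM Hs Hpi aS bS).
Qed.

Lemma LR_of_ii Theta (pi pit : R -> R) :
  (forall (S : {fset R}) (sigma : R -> R -> R),
        signaling Theta S sigma -> MLRP Theta S sigma ->
        lr_ge S (fun s => s) (marg Theta pit sigma) (marg Theta pi sigma)) ->
  LR Theta pit pi.
Proof.
move=> H.
pose sigma := fun th s : R => ((th == s)%:R : R).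
have Hs : signaling Theta Theta sigma.
  move=> th thT; split=> [s _|]; first exact: ler0n.
  rewrite /sigma (eq_bigr (fun s => 1 * (s == th)%:R)) ?sum_ind ?thT //.
  by move=> s _; rewrite eq_sym mul1r.
have HM : MLRP Theta Theta sigma.
  move=> s s' th th' _ _ _ _ ss' tt'; rewrite /sigma.
  case: (eqVneq th s') => [e1|_]; last by rewrite mul0r mulr_ge0 ?ler0n.
  case: (eqVneq th' s) => [e2|_]; last by rewrite mulr0 mulr_ge0 ?ler0n.
  move: tt'; rewrite e1 e2 => h; have := lt_trans ss' h.
  by rewrite ltxx.
have Hm : forall rho s, s \in Theta -> marg Theta rho sigma s = rho s.
  move=> rho s sT; rewrite /marg /sigma.
  have -> : \sum_(th <- Theta) rho th * (th == s)%:R = \sum_(th <- Theta) rho s * (th == s)%:R.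
    by apply: eq_bigr => th _; case: (eqVneq th s) => [->|]; rewrite ?mulr0.
  by rewrite sum_ind sT.
have := (H Theta sigma Hs HM); rewrite lrid_LR => HL u v uT vT uv.
by have := HL u v uT vT uv; rewrite !Hm.
Qed.
End Signals.
Section Order.
Variable R : realType.
Local Open Scope ring_scope.
Implicit Types (Theta S Gamma : {fset R}).

Lemma seq_min (s : seq R) : s != [::] -> exists2 x, x \in s & forall y, y \in s -> x <= y.
Proof.
elim: s => // x s IH _.
case: (eqVneq s [::]) => [->|ns].
  by exists x => [|y]; rewrite ?inE // => /eqP ->.
have [m ms Hm] := IH ns.
case: (leP x m) => [xm|mx].
  exists x; first by rewrite inE eqxx.
  move=> y; rewrite inE => /orP[/eqP ->//|ys]; exact: le_trans xm (Hm y ys).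
exists m; first by rewrite inE ms orbT.
move=> y; rewrite inE => /orP[/eqP ->|ys]; [exact: ltW | exact: Hm].
Qed.

Lemma succ_ex Theta t : (exists2 th, th \in Theta & t < th) ->
  exists t', [/\ t' \in Theta, t < t' & forall th, th \in Theta -> t < th -> t' <= th].
Proof.
move=> [th thT tth].
have ne : [seq x <- Theta | t < x] != [::].
  apply/eqP => e; have : th \in [seq x <- Theta | t < x] by rewrite mem_filter tth thT.
  by rewrite e.
have [m ms Hm] := seq_min ne.
move: ms; rewrite mem_filter => /andP[tm mT].
exists m; split => // y yT ty; apply: Hm; by rewrite mem_filter ty yT.
Qed.

Lemma cnt_le (s : seq R) (p q : pred R) :
  (forall x, x \in s -> p x -> q x) -> (count p s <= count q s)%N.
Proof.
elim: s => //= x s IH H.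
have h1 : (p x <= q x)%N.
  case px: (p x) => //; by rewrite (H x) // inE eqxx.
have H' : forall z, z \in s -> p z -> q z by move=> z zs; apply: H; rewrite inE zs orbT.
have h2 := IH H'.
lia.
Qed.

Lemma cnt_lt (s : seq R) (p q : pred R) y :
  (forall x, x \in s -> p x -> q x) -> y \in s -> q y -> ~~ p y ->
  (count p s < count q s)%N.
Proof.
elim: s => //= x s IH H.
have h1 : (p x <= q x)%N.
  case px: (p x) => //; by rewrite (H x) // inE eqxx.
have H' : forall z, z \in s -> p z -> q z by move=> z zs; apply: H; rewrite inE zs orbT.
rewrite inE => /orP[/eqP ->|ys] qy npy.
  have := cnt_le H'; move: npy qy; case: (p x) => //; case: (q x) => //= _ _; lia.
have := IH H' ys qy npy; lia.
Qed.

Lemma ind_above Theta (P : R -> Prop) :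
  (forall t, t \in Theta -> (forall t', t' \in Theta -> t < t' -> P t') -> P t) ->
  forall t, t \in Theta -> P t.
Proof.
move=> H.
suff : forall n t, t \in Theta -> (count (fun x => (t < x)%R) Theta <= n)%N -> P t.
  by move=> H1 t tT; apply: (H1 _ t tT).
elim => [|n IH] t tT hn; apply: H => // t' t'T tt';
  have h := @cnt_lt Theta (fun x => t' < x) (fun x => t < x) t'
     (fun x _ h => lt_trans tt' h) t'T tt' (negbT (ltxx t')).
  by have := leq_trans h hn.
apply: IH => //.
by rewrite -ltnS (leq_trans h hn).
Qed.
End Order.
Section Construct.
Variable R : realType.
Local Open Scope ring_scope.
Implicit Types (Theta S Gamma : {fset R}).

Lemma step Theta Gamma (rho tau : R -> R) (be ga : R) :
  (forall x, x \in Gamma -> x \in Theta) -> (forall th, th \in Theta -> 0 <= rho th) ->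
  mass rho Theta = 1 -> 0 < mass rho Gamma -> 0 <= ga -> ga <= be ->
  (forall th, th \in Theta -> tau th = rho th * (if th \in Gamma then be else ga)) ->
  mass tau Theta = 1 ->
  0 <= 1 - ga <= 1 /\ {in Theta, tau =1 strengthen Gamma (1 - ga) rho}.
Proof.
move=> sub r0 r1 m0 g0 gb Ht t1.
set m := mass rho Gamma.
have E : mass tau Theta = be * m + ga * (1 - m).
  rewrite /mass (eq_big_seq (fun th => rho th * (if th \in Gamma then be else ga))) //.
  rewrite (bigID (fun th => th \in Gamma)) /=.
  rewrite (eq_bigr (fun th => be * rho th)); last by move=> i ->; rewrite mulrC.
  rewrite [X in _ + X = _](eq_bigr (fun th => ga * rho th)); last by move=> i /negbTE ->; rewrite mulrC.
  rewrite -!big_distrr /= sum_sub //; congr (_ + _); congr (_ * _).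
  rewrite -r1 /m /mass [in RHS](bigID (fun th => th \in Gamma)) /= sum_sub //.
  lra.
rewrite t1 in E.
have E2 : 1 - ga = (be - ga) * m.
  have -> : (be - ga) * m = be * m + ga * (1 - m) - ga by ring.
  by rewrite -E.
split.
  apply/andP; split; last lra.
  rewrite E2; apply: mulr_ge0; [by rewrite subr_ge0 | exact: ltW].
move=> th thT; rewrite Ht // /strengthen /cond -/m.
case: ifP => _; last by ring.
have -> : 1 - (1 - ga) = ga by ring.
rewrite E2; field; by rewrite gt_eqF.
Qed.

Variables (Theta : {fset R}) (pi pit : R -> R).
Hypothesis Hpi : forall th, th \in Theta -> 0 < pi th.
Hypothesis Hpit0 : forall th, th \in Theta -> 0 <= pit th.
Hypothesis Hpi1 : mass pi Theta = 1.
Hypothesis Hpit1 : mass pit Theta = 1.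
Hypothesis HLR : LR Theta pit pi.

Let r th := pit th / pi th.
Let mx th t : R := if th < t then t else th.
Let Z t := \sum_(th <- Theta) pi th * r (mx th t).
Let h t th := pi th * r (mx th t) / Z t.

Lemma r0 th : th \in Theta -> 0 <= r th.
Proof. move=> thT; apply: divr_ge0; [exact: Hpit0 | exact/ltW/Hpi]. Qed.

Lemma rmono u v : u \in Theta -> v \in Theta -> u <= v -> r u <= r v.
Proof.
move=> uT vT; rewrite le_eqVlt => /orP[/eqP ->//|uv].
rewrite /r ler_pdivrMr ?Hpi // mulrAC ler_pdivlMr ?Hpi //.
exact: HLR.
Qed.

Lemma mxT th t : th \in Theta -> t \in Theta -> mx th t \in Theta.
Proof. by rewrite /mx; case: ifP. Qed.

Lemma mx_ge th t : th <= mx th t.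
Proof. by rewrite /mx; case: ifP => // /ltW. Qed.

Lemma Zpos t : t \in Theta -> 0 < Z t.
Proof.
move=> tT.
have Hn : forall th, th \in Theta -> 0 <= pi th * r (mx th t).
  move=> th thT; apply: mulr_ge0; [exact/ltW/Hpi | apply: r0; exact: mxT].
rewrite lt_def sum_ge0s // andbT; apply/eqP => Z0.
have H0 := sum_eq0s Hn Z0.
move: Hpit1; rewrite /mass big_seq big1 => [/eqP|th thT].
  by rewrite eq_sym oner_eq0.
have := H0 th thT; move/eqP; rewrite mulf_eq0 (gt_eqF (Hpi thT)) /= => /eqP rz.
have : r th <= 0 by rewrite -rz; apply: rmono => //; [exact: mxT | exact: mx_ge].
have := r0 thT => a b.
have : r th = 0 by apply/eqP; rewrite eq_le a b.
rewrite /r => /eqP; rewrite mulf_eq0 invr_eq0 (gt_eqF (Hpi thT)) orbF.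
by move/eqP.
Qed.

Lemma h_ge0 t th : t \in Theta -> th \in Theta -> 0 <= h t th.
Proof.
move=> tT thT; apply: divr_ge0; last exact/ltW/Zpos.
apply: mulr_ge0; [exact/ltW/Hpi | apply: r0; exact: mxT].
Qed.

Lemma h_mass t : t \in Theta -> mass (h t) Theta = 1.
Proof.
move=> tT; rewrite /mass /h -big_distrl /= -/(Z t) divff //.
exact/lt0r_neq0/Zpos.
Qed.

Lemma reach_h : forall t, t \in Theta ->
  exists rho, mono_reach Theta pi rho /\ {in Theta, h t =1 rho}.
Proof.
apply: ind_above => t tT IH.
case: (boolP [exists x : Theta, t < val x]) => [/existsP [[t1 t1T] /= tt1]|none].
- have [t' [t'T tt' Hmin]] := @succ_ex _ Theta t (ex_intro2 _ _ t1 t1T tt1).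
  have [rho [Hr Hh]] := IH t' t'T tt'.
  have Hmx1 : forall th, th \in Theta -> t < th -> mx th t = th /\ mx th t' = th.
    move=> th thT tth; rewrite /mx ltNge (ltW tth) /= ltNge (Hmin th thT tth).
    by [].
  have Hmx2 : forall th, th \in Theta -> ~~ (t < th) -> mx th t = t /\ mx th t' = t'.
    move=> th thT; rewrite -leNgt => tht; rewrite /mx.
    have tht' : th < t' by exact: le_lt_trans tht tt'.
    rewrite tht' /=; split => //.
    case: (eqVneq th t) => [->|ne]; first by rewrite ltxx.
    have -> : th < t by rewrite lt_def eq_sym ne tht.
    by [].
  have [rt0|rtpos] := eqVneq (r t') 0.
    exists rho; split => // th thT; rewrite -Hh //.
    have Hrr : forall x, x \in Theta -> r (mx x t) = r (mx x t').
      move=> x xT; case: (boolP (t < x)) => tx.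
        by have [-> ->] := Hmx1 x xT tx.
      have [-> ->] := Hmx2 x xT tx; rewrite rt0; apply/eqP; rewrite eq_le r0 // andbT.
      by rewrite -rt0; apply: rmono => //; exact: ltW.
    rewrite /h Hrr //; congr (_ / _).
    by rewrite /Z big_seq [RHS]big_seq; apply: eq_bigr => x xT; rewrite Hrr.
  set Gamma := [fset x in Theta | t < x].
  have inG : forall x, (x \in Gamma) = (x \in Theta) && (t < x) by move=> x; rewrite !inE.
  have sub : forall x, x \in Gamma -> x \in Theta by move=> x; rewrite inG => /andP[].
  have upG : upper_set Theta Gamma.
    split=> // x y; rewrite !inG => /andP[xT tx] yT xy; rewrite yT; exact: lt_trans tx xy.
  have rtp : 0 < r t' by rewrite lt_def rtpos r0.
  have Zt := Zpos tT; have Zt' := Zpos t'T.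
  set be := Z t' / Z t.
  set ga := r t / r t' * (Z t' / Z t).
  have ga0 : 0 <= ga by apply: mulr_ge0; apply: divr_ge0; rewrite ?r0 //; exact: ltW.
  have gab : ga <= be.
    rewrite /ga /be -[X in _ <= X]mul1r; apply: ler_wpM2r.
      by apply: divr_ge0; exact: ltW.
    by rewrite ler_pdivrMr // mul1r; apply: rmono => //; exact: ltW.
  have r1 : mass rho Theta = 1.
    by rewrite -(h_mass t'T) /mass big_seq [RHS]big_seq; apply: eq_bigr => x xT; rewrite Hh.
  have rho0 : forall th, th \in Theta -> 0 <= rho th by move=> x xT; rewrite -Hh ?h_ge0.
  have mG : 0 < mass rho Gamma.
    have t'G : t' \in Gamma by rewrite inG t'T tt'.
    have rG : forall x, x \in Gamma -> 0 <= rho x by move=> x /sub; exact: rho0.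
    apply: lt_le_trans (sum_ge1 t'G rG).
    rewrite -Hh // /h; apply: divr_gt0 => //; apply: mulr_gt0; first exact: Hpi.
    by have [_ ->] := Hmx1 t' t'T tt'.
  have Ht : forall th, th \in Theta -> h t th = rho th * (if th \in Gamma then be else ga).
    move=> th thT; rewrite -Hh // inG thT /=; case: ifP => tth.
      have [e1 e2] := Hmx1 th thT tth; rewrite /h e1 e2 /be; field.
      by apply/andP; split; apply: lt0r_neq0.
    have [e1 e2] := Hmx2 th thT (negbT tth); rewrite /h e1 e2 /ga; field.
    by apply/and3P; split; apply: lt0r_neq0.
  have [/andP[a0 a1] Heq] := step sub rho0 r1 mG ga0 gab Ht (h_mass tT).
  exists (strengthen Gamma (1 - ga) rho); split => //.
  by apply: mono_reachS => //; rewrite a0 a1.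
- exists pi; split; first exact: mono_reach0.
  have Hall : forall th, th \in Theta -> mx th t = t.
    move=> th thT; rewrite /mx; case: ifP => // /negbT; rewrite -leNgt => tth.
    case: (eqVneq th t) => // ne.
    move/existsP: none; case; exists [` thT]%fset => /=.
    by rewrite lt_def ne tth.
  have ZE : Z t = r t.
    rewrite /Z big_seq (eq_bigr (fun th => r t * pi th)); last first.
      by move=> x xT; rewrite Hall // mulrC.
    by rewrite -big_seq -big_distrr /= -/(mass pi Theta) Hpi1 mulr1.
  move=> th thT; rewrite /h Hall // ZE; field.
  by rewrite -ZE; apply: lt0r_neq0; apply: Zpos.
Qed.

Lemma MS_of_LR : monotonic_strengthening Theta pi pit.
Proof.
have ne : (Theta : seq R) != [::].
  apply/eqP => e; move: Hpi1; rewrite /mass e big_nil => /eqP.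
  by rewrite eq_sym oner_eq0.
have [t0 t0T Hmin] := seq_min ne.
have [rho [Hr Hh]] := reach_h t0T.
exists rho; split => // th thT; rewrite -Hh //.
have e : mx th t0 = th by rewrite /mx ltNge Hmin.
have Z1 : Z t0 = 1.
  rewrite -Hpit1 /Z /mass big_seq [RHS]big_seq; apply: eq_bigr => x xT.
  rewrite /mx ltNge Hmin //= /r; field; exact/lt0r_neq0/Hpi.
rewrite /h e Z1 divr1 /r; field; exact/lt0r_neq0/Hpi.
Qed.
End Construct.
Section Necessity.
Variable R : realType.
Local Open Scope ring_scope.
Implicit Types (Theta S Gamma : {fset R}).

Lemma LR_of_adj Theta (pi pit : R -> R) :
  (forall th, th \in Theta -> 0 < pi th) ->
  (forall u v, u \in Theta -> v \in Theta -> u < v ->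
     (forall th, th \in Theta -> u < th -> v <= th) -> pit u * pi v <= pit v * pi u) ->
  LR Theta pit pi.
Proof.
move=> Hpi Hadj.
suff H : forall u, u \in Theta -> forall v, v \in Theta -> u < v -> pit u * pi v <= pit v * pi u.
  by move=> u v uT vT uv; apply: H.
apply: ind_above => u uT IH v vT uv.
have [u' [u'T uu' Hmin]] := @succ_ex _ Theta u (ex_intro2 _ _ v vT uv).
have h1 := Hadj u u' uT u'T uu' Hmin.
case: (eqVneq v u') => [->//|ne].
have u'v : u' < v by rewrite lt_def ne Hmin.
have h2 := IH u' u'T uu' v vT u'v.
have pu := Hpi u uT; have pv := Hpi v vT; have pu' := Hpi u' u'T.
rewrite -(ler_pM2r pu').
have e1 := ler_wpM2r (ltW pv) h1.
have e2 := ler_wpM2r (ltW pu) h2.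
rewrite mulrAC [X in _ <= X]mulrAC.
apply: le_trans e1 _; rewrite [X in X <= _]mulrAC; exact: e2.
Qed.

Definition row (k : nat) (s : R) : R :=
  match k with
  | 0 => (s == 0)%:R
  | 1 => 3/4 * (s == 1)%:R + 1/4 * (s == 2)%:R
  | 2 => 1/2 * (s == 1)%:R + 1/2 * (s == 2)%:R
  | _ => (s == 3)%:R
  end.

Lemma n01 : ((0:R) == 1) = false. Proof. by rewrite (eqr_nat R 0 1). Qed.
Lemma n02 : ((0:R) == 2) = false. Proof. by rewrite (eqr_nat R 0 2). Qed.
Lemma n03 : ((0:R) == 3) = false. Proof. by rewrite (eqr_nat R 0 3). Qed.
Lemma n10 : ((1:R) == 0) = false. Proof. by rewrite (eqr_nat R 1 0). Qed.
Lemma n12 : ((1:R) == 2) = false. Proof. by rewrite (eqr_nat R 1 2). Qed.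
Lemma n13 : ((1:R) == 3) = false. Proof. by rewrite (eqr_nat R 1 3). Qed.
Lemma n20 : ((2:R) == 0) = false. Proof. by rewrite (eqr_nat R 2 0). Qed.
Lemma n21 : ((2:R) == 1) = false. Proof. by rewrite (eqr_nat R 2 1). Qed.
Lemma n23 : ((2:R) == 3) = false. Proof. by rewrite (eqr_nat R 2 3). Qed.
Lemma n30 : ((3:R) == 0) = false. Proof. by rewrite (eqr_nat R 3 0). Qed.
Lemma n31 : ((3:R) == 1) = false. Proof. by rewrite (eqr_nat R 3 1). Qed.
Lemma n32 : ((3:R) == 2) = false. Proof. by rewrite (eqr_nat R 3 2). Qed.
Definition tbl := (n01, n02, n03, n10, n12, n13, n20, n21, n23, n30, n31, n32).

Definition S4 : {fset R} := [fset (0:R); 1; 2; 3].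

Lemma inS4 s : s \in S4 -> [\/ s = 0, s = 1, s = 2 | s = 3].
Proof. by rewrite !inE => /orP[/orP[/orP[]|]|] /eqP ->; [constructor 1|constructor 2|constructor 3|constructor 4]. Qed.

Lemma S4_0 : (0:R) \in S4. Proof. by rewrite !inE eqxx. Qed.
Lemma S4_1 : (1:R) \in S4. Proof. by rewrite !inE eqxx !orbT. Qed.
Lemma S4_2 : (2:R) \in S4. Proof. by rewrite !inE eqxx !orbT. Qed.
Lemma S4_3 : (3:R) \in S4. Proof. by rewrite !inE eqxx !orbT. Qed.

Lemma row_ge0 k s : 0 <= row k s.
Proof.
case: k => [|[|[|k]]] /=; rewrite ?ler0n //; apply: addr_ge0; apply: mulr_ge0; rewrite ?ler0n //; lra.
Qed.

Lemma row_sum k : \sum_(s <- S4) row k s = 1.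
Proof.
case: k => [|[|[|k]]] /=.
- by rewrite (eq_bigr (fun s => 1 * (s == 0)%:R)) ?sum_ind ?S4_0 // => s _; rewrite mul1r.
- by rewrite big_split /= !sum_ind S4_1 S4_2; lra.
- by rewrite big_split /= !sum_ind S4_1 S4_2; lra.
- by rewrite (eq_bigr (fun s => 1 * (s == 3)%:R)) ?sum_ind ?S4_3 // => s _; rewrite mul1r.
Qed.

Lemma row_mlrp k k' s s' : (k <= k')%N -> s \in S4 -> s' \in S4 -> s < s' ->
  row k s' * row k' s <= row k' s' * row k s.
Proof.
move=> kk' /inS4[]-> /inS4[]->; rewrite ?ltxx // => h; try lra;
case: k kk' => [|[|[|k]]]; case: k' => [|[|[|k']]] //= _;
rewrite ?eqxx ?tbl /= ?mulr0 ?mulr1 ?mul0r ?mul1r ?addr0 ?add0r; lra.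
Qed.
End Necessity.
Section Adj.
Variable R : realType.
Local Open Scope ring_scope.
Implicit Types (Theta S Gamma : {fset R}).

Variables (Theta : {fset R}) (pi pit : R -> R) (u v : R).
Hypothesis Hpi : forall th, th \in Theta -> 0 < pi th.
Hypothesis uT : u \in Theta.
Hypothesis vT : v \in Theta.
Hypothesis uv : u < v.
Hypothesis Hadj : forall th, th \in Theta -> u < th -> v <= th.
Hypothesis HMO : monotonic_optimistic Theta pi pit.

Let k (th : R) : nat := (((u <= th)%R : nat) + ((v <= th)%R : nat) + ((v < th)%R : nat))%N.
Let sigma (th s : R) : R := row (k th) s.
Let Gamma := [fset x in Theta | v <= x].

Lemma kval th : th \in Theta ->
  [\/ th < u /\ k th = 0%N, th = u /\ k th = 1%N, th = v /\ k th = 2%N | v < th /\ k th = 3%N].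
Proof.
move=> thT; rewrite /k.
case: (ltgtP th u) => [thu|uth|->].
- constructor 1; split => //.
  by rewrite ?(leNgt u th) ?thu (leNgt v th) (lt_trans thu uv) (ltNge v th) (ltW (lt_trans thu uv)).
- have vth := Hadj thT uth.
  case: (ltgtP v th) => [vth'|//|<-].
  + by constructor 4; split => //; rewrite ?(ltW uth) ?vth ?vth'.
  + by move: vth; rewrite leNgt => /negP.
  + by constructor 3; split => //; rewrite ?(ltW uv) ?lexx ?ltxx.
- by constructor 2; split => //; rewrite ?lexx (leNgt v u) uv (ltNge v u) (ltW uv).
Qed.

Lemma k_mono th th' : th <= th' -> (k th <= k th')%N.
Proof.
move=> h; rewrite /k.
have b1 : (u <= th -> u <= th') by move=> x; exact: le_trans x h.
have b2 : (v <= th -> v <= th') by move=> x; exact: le_trans x h.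
have b3 : (v < th -> v < th') by move=> x; exact: lt_le_trans x h.
move: b1 b2 b3; case: (u <= th); case: (u <= th'); case: (v <= th); case: (v <= th');
  case: (v < th); case: (v < th') => //= H1 H2 H3;
  try (by have := H1 isT); try (by have := H2 isT); try (by have := H3 isT).
Qed.

Lemma inG th : (th \in Gamma) = (th \in Theta) && (v <= th).
Proof. by rewrite !inE. Qed.

Lemma upG : upper_set Theta Gamma.
Proof.
split=> [th|th th']; first by rewrite inG => /andP[].
by rewrite !inG => /andP[_ vth] -> thth'; rewrite (le_trans vth (ltW thth')).
Qed.

Lemma sig_ok : signaling Theta (S4 R) sigma.
Proof. move=> th _; split=> [s _|]; [exact: row_ge0 | exact: row_sum]. Qed.

Lemma mlrp_ok : MLRP Theta (S4 R) sigma.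
Proof.
move=> s s' th th' sS s'S _ _ ss' tt'.
by apply: row_mlrp => //; apply: k_mono; exact: ltW.
Qed.

Lemma marg_s (Q : R -> R) s : row 0 s = 0 -> row 3 s = 0 ->
  marg Theta Q sigma s = Q u * row 1 s + Q v * row 2 s.
Proof.
move=> r0 r3.
have uv' : (u == v) = false by rewrite lt_eqF.
rewrite /marg big_seq (eq_bigr (fun th => (Q u * row 1 s) * (th == u)%:R + (Q v * row 2 s) * (th == v)%:R)).
  by rewrite -big_seq big_split /= !sum_ind uT vT.
move=> th thT; rewrite /sigma.
have vu' : (v == u) = false by rewrite gt_eqF.
case: (kval thT) => [[H ->]|[-> ->]|[-> ->]|[H ->]].
- by rewrite r0 mulr0 (lt_eqF H) (lt_eqF (lt_trans H uv)) /= ?mulr0n !mulr0 addr0.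
- by rewrite eqxx uv' /= ?mulr0n ?mulr1n mulr0 mulr1 addr0.
- by rewrite eqxx vu' /= ?mulr0n ?mulr1n mulr0 mulr1 add0r.
- by rewrite r3 mulr0 (gt_eqF H) (gt_eqF (lt_trans uv H)) /= ?mulr0n !mulr0 addr0.
Qed.


Lemma rv01 : row 0 (1:R) = 0. Proof. rewrite /= ?eqxx ?tbl /=; lra. Qed.
Lemma rv31 : row 3 (1:R) = 0. Proof. rewrite /= ?eqxx ?tbl /=; lra. Qed.
Lemma rv02 : row 0 (2:R) = 0. Proof. rewrite /= ?eqxx ?tbl /=; lra. Qed.
Lemma rv32 : row 3 (2:R) = 0. Proof. rewrite /= ?eqxx ?tbl /=; lra. Qed.
Lemma rv11 : row 1 (1:R) = 3/4. Proof. rewrite /= ?eqxx ?tbl /=; lra. Qed.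
Lemma rv21 : row 2 (1:R) = 1/2. Proof. rewrite /= ?eqxx ?tbl /=; lra. Qed.
Lemma rv12 : row 1 (2:R) = 1/4. Proof. rewrite /= ?eqxx ?tbl /=; lra. Qed.
Lemma rv22 : row 2 (2:R) = 1/2. Proof. rewrite /= ?eqxx ?tbl /=; lra. Qed.
Lemma rv20 : row 2 (0:R) = 0. Proof. rewrite /= ?eqxx ?tbl /=; lra. Qed.
Lemma rv30 : row 3 (0:R) = 0. Proof. rewrite /= ?eqxx ?tbl /=; lra. Qed.
Lemma rv03 : row 0 (3:R) = 0. Proof. rewrite /= ?eqxx ?tbl /=; lra. Qed.
Lemma rv13 : row 1 (3:R) = 0. Proof. rewrite /= ?eqxx ?tbl /=; lra. Qed.

Lemma N12 s : row 3 s = 0 ->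
  \sum_(th <- Theta | th \in Gamma) pi th * sigma th s = pi v * row 2 s.
Proof.
move=> r3.
rewrite big_mkcond big_seq (eq_bigr (fun th => (pi v * row 2 s) * (th == v)%:R)).
  by rewrite -big_seq sum_ind vT.
move=> th thT; rewrite inG thT /= /sigma.
case: (kval thT) => [[H ->]|[-> ->]|[-> ->]|[H ->]].
- by rewrite leNgt (lt_trans H uv) (lt_eqF (lt_trans H uv)) /= ?mulr0n mulr0.
- by rewrite (leNgt v u) uv (lt_eqF uv) /= ?mulr0n mulr0.
- by rewrite lexx eqxx /= mulr1.
- by rewrite (ltW H) (gt_eqF H) r3 /= ?mulr0n !mulr0.
Qed.

Lemma N0 : \sum_(th <- Theta | th \in Gamma) pi th * sigma th 0 = 0.
Proof.
rewrite big_seq_cond big1 // => th /andP[thT]; rewrite inG thT /= /sigma => vth.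
case: (kval thT) => [[H ->]|[E ->]|[-> ->]|[H ->]].
- by move: vth; rewrite leNgt (lt_trans H uv).
- by move: vth; rewrite E (leNgt v u) uv.
- by rewrite rv20 mulr0.
- by rewrite rv30 mulr0.
Qed.

Lemma N3 : \sum_(th <- Theta | th \in Gamma) pi th * sigma th 3 = marg Theta pi sigma 3.
Proof.
rewrite big_mkcond /marg big_seq [RHS]big_seq; apply: eq_bigr => th thT.
rewrite inG thT /=; case: ifP => // vth; rewrite /sigma.
case: (kval thT) => [[H ->]|[E ->]|[E ->]|[H ->]].
- by rewrite rv03 mulr0.
- by rewrite rv13 mulr0.
- by move: vth; rewrite E lexx.
- by move: vth; rewrite (ltW H).
Qed.

Lemma adj_ineq : pit u * pi v <= pit v * pi u.
Proof.
set post := posterior Theta Gamma pi sigma.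
have A0 := Hpi uT; have B0 := Hpi vT.
have m1 : forall Q, marg Theta Q sigma 1 = Q u * (3/4) + Q v * (1/2).
  by move=> Q; rewrite marg_s ?rv01 ?rv31 // rv11 rv21.
have m2 : forall Q, marg Theta Q sigma 2 = Q u * (1/4) + Q v * (1/2).
  by move=> Q; rewrite marg_s ?rv02 ?rv32 // rv12 rv22.
set p1 := pi v * (1/2) / (pi u * (3/4) + pi v * (1/2)).
set p2 := pi v * (1/2) / (pi u * (1/4) + pi v * (1/2)).
have e1 : post 1 = p1 by rewrite /post /posterior N12 ?rv31 // rv21 m1.
have e2 : post 2 = p2 by rewrite /post /posterior N12 ?rv32 // rv22 m2.
have e0 : post 0 = 0 by rewrite /post /posterior N0 mul0r.
have e3 : post 3 = 0 \/ post 3 = 1.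
  rewrite /post /posterior N3; case: (eqVneq (marg Theta pi sigma 3) 0) => [->|nz].
    by left; rewrite mul0r.
  by right; rewrite divff.
have p10 : 0 < p1.
  rewrite /p1; apply: divr_gt0; first lra.
  lra.
have p12 : p1 < p2.
  rewrite /p1 /p2 ltr_pdivrMr; last lra.
  rewrite mulrAC ltr_pdivlMr; last lra.
  nra.
have p21 : p2 < 1.
  rewrite /p2 ltr_pdivrMr; last lra.
  lra.
have pm1 : forall Q, pmass (S4 R) post Q p1 = Q 1.
  move=> Q; apply: sum_eq1; first exact: S4_1.
  move=> x /inS4[]->.
  - by rewrite e0 n01 lt_eqF.
  - by rewrite e1 !eqxx.
  - by rewrite e2 n21 gt_eqF.
  - by rewrite n31; case: e3 => ->; [rewrite lt_eqF | rewrite gt_eqF //; apply: lt_trans p12 p21].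
have pm2 : forall Q, pmass (S4 R) post Q p2 = Q 2.
  move=> Q; apply: sum_eq1; first exact: S4_2.
  move=> x /inS4[]->.
  - by rewrite e0 n02 lt_eqF //; apply: lt_trans p10 p12.
  - by rewrite e1 n12 lt_eqF.
  - by rewrite e2 !eqxx.
  - by rewrite n32; case: e3 => ->; [rewrite lt_eqF //; apply: lt_trans p10 p12 | rewrite gt_eqF].
have := HMO upG sig_ok mlrp_ok p12.
rewrite -/post !pm1 !pm2 !m1 !m2 => H.
rewrite -subr_ge0 in H.
have E : (pit u * (1 / 4) + pit v * (1 / 2)) * (pi u * (3 / 4) + pi v * (1 / 2)) -
     (pit u * (3 / 4) + pit v * (1 / 2)) * (pi u * (1 / 4) + pi v * (1 / 2)) =
     (pit v * pi u - pit u * pi v) / 4 by field.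
rewrite E in H.
lra.
Qed.
End Adj.
Lemma LR_of_MO (R : realType) (Theta : {fset R}) (pi pit : R -> R) :
  (forall th, th \in Theta -> 0 < pi th)%R -> monotonic_optimistic Theta pi pit ->
  LR Theta pit pi.
Proof.
move=> Hpi HMO; apply: LR_of_adj => // u v uT vT uv Hadj.
exact: (adj_ineq Hpi uT vT uv Hadj HMO).
Qed.

Unset Implicit Arguments.
Set Strict Implicit.

Theorem proposition4 (R : realType) (Theta : {fset R}) (pi pit : R -> R) :
  is_prob Theta pi -> (forall th, th \in Theta -> 0 < pi th) ->
  is_prob Theta pit ->
  (monotonic_optimistic Theta pi pit <-> monotonic_strengthening Theta pi pit) /\
  (monotonic_strengthening Theta pi pit <-> lr_ge Theta (fun x => x) pit pi) /\
  (monotonic_strengthening Theta pi pit <->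
     (forall (S : {fset R}) (sigma : R -> R -> R),
        signaling Theta S sigma -> MLRP Theta S sigma ->
        lr_ge S (fun s => s) (marg Theta pit sigma) (marg Theta pi sigma))) /\
  (monotonic_strengthening Theta pi pit <->
     (forall (S : {fset R}) (sigma : R -> R -> R),
        signaling Theta S sigma -> MLRP Theta S sigma ->
        forall Rf : R -> R, {in S &, forall s s', s <= s' -> Rf s <= Rf s'} ->
        lr_ge S Rf (marg Theta pit sigma) (marg Theta pi sigma))).
Proof.
move=> [pi0 pi1] Hpi [pit0 pit1].
have MSLR : monotonic_strengthening Theta pi pit <-> LR Theta pit pi.
  split.
    move=> [rho [Hr Hh]] u v uT vT uv.
    have [_ HL] := reach_LR Hpi Hr.
    by rewrite !Hh //; apply: HL.
  exact: MS_of_LR.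
have iii : LR Theta pit pi -> forall (S : {fset R}) (sigma : R -> R -> R),
        signaling Theta S sigma -> MLRP Theta S sigma ->
        forall Rf : R -> R, {in S &, forall s s', s <= s' -> Rf s <= Rf s'} ->
        lr_ge S Rf (marg Theta pit sigma) (marg Theta pi sigma).
  exact: iii_of_LR.
rewrite MSLR; split; last split; last split.
- split; [exact: LR_of_MO | exact: MO_of_LR].
- by rewrite lrid_LR.
- split; last exact: LR_of_ii.
  by move=> HL S sigma Hs HM; apply: iii => // s s' _ _.
- split; first exact: iii.
  move=> H; apply: LR_of_ii => S sigma Hs HM; apply: H => // s s' _ _.
Qed.
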